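(* Let $X$ be a normal topological space and let $f,g,h\colon X\to Y$ be continuous maps. Then $\mathrm{D}(f,h)\leq \mathrm{D}(f,g)+\mathrm{D}(g,h)$.
   Context: For continuous maps $f,g\colon X\to Y$, the homotopic distance $\mathrm{D}(f,g)$ is the least integer $n\geq 0$ such that there is an open cover $\{U_0,\dots,U_n\}$ of $X$ with $f|_{U_j}\simeq g|_{U_j}$ for all $j$; if no such cover exists, $\mathrm{D}(f,g)=\infty$. *)

(* Defs.v *)
From HB Require Import structures.
From mathcomp Require Import all_boot all_order all_algebra.
From mathcomp Require Import all_classical all_reals all_analysis.
From mathcomp Require Import Rstruct Rstruct_topology.
Set Implicit Arguments. Unset Strict Implicit. Unset Printing Implicit Defensive.
Import Order.TTheory GRing.Theory Num.Theory.
Local Open Scope classical_set_scope.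
Local Open Scope ring_scope.

Definition unit_interval : set Rdefinitions.R := `[0%R, 1%R].

(* f|_U ~ g|_U : the restrictions of f and g to U (with the subspace
   topology) are homotopic, i.e. there is H : U x [0,1] -> Y continuous
   (for the subspace topology of U x [0,1] in X x R) with H(x,0) = f x and
   H(x,1) = g x for x in U. *)
Definition homotopic_on {X Y : topologicalType} (U : set X) (f g : X -> Y) :=
  exists H : X * Rdefinitions.R -> Y,
    [/\ {within U `*` unit_interval, continuous H},
        (forall x, U x -> H (x, 0%R) = f x) &
        (forall x, U x -> H (x, 1%R) = g x)].

Definition hdist_cover {X Y : topologicalType} (f g : X -> Y) (n : nat) :=
  exists U : nat -> set X,
    [/\ (forall j, (j <= n)%N -> open (U j)),
        (forall x : X, exists2 j, (j <= n)%N & U j x) &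
        (forall j, (j <= n)%N -> homotopic_on (U j) f g)].

(* Homotopic distance D(f,g), valued in the extended reals: the least such n,
   or +oo if no such cover exists (the infimum of the empty set is +oo). *)
Definition hdist {X Y : topologicalType} (f g : X -> Y) : \bar Rdefinitions.R :=
  ereal_inf [set ((n%:R)%:E : \bar Rdefinitions.R) | n in hdist_cover f g].

(* Main.v *)
Require Import Defs.
From HB Require Import structures.
From mathcomp Require Import all_boot all_order all_algebra.
From mathcomp Require Import all_classical all_reals all_analysis.
From mathcomp Require Import Rstruct Rstruct_topology.
Set Implicit Arguments. Unset Strict Implicit. Unset Printing Implicit Defensive.
Import Order.TTheory GRing.Theory Num.Theory.
Import numFieldNormedType.Exports.
Local Open Scope classical_set_scope.
Local Open Scope ring_scope.
Local Notation RR := Rdefinitions.R.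
From mathcomp Require Import lra.
Lemma aff_cont (R : realType) (a b : R) : continuous (fun x : R => a * x + b).
Proof.
move=> x; apply: cvgD; last exact: cvg_cst.
by apply: cvgMl_tmp; exact: cvg_id.
Qed.
Lemma aff_contR (a b : Rdefinitions.R) : continuous (fun x : Rdefinitions.R => a * x + b).
Proof. exact: aff_cont. Qed.
Lemma fst_cont {A B : topologicalType} : continuous (@fst A B).
Proof. by move=> [a b]; exact: cvg_fst. Qed.
Lemma snd_cont {A B : topologicalType} : continuous (@snd A B).
Proof. by move=> [a b]; exact: cvg_snd. Qed.
Lemma phi_cont {X : topologicalType} (a b : Rdefinitions.R) :
  continuous (fun p : X * Rdefinitions.R => (p.1, a * p.2 + b)).
Proof.
move=> p.
have h1 : (fun q : X * Rdefinitions.R => q.1) @ nbhs p --> p.1 by exact: (@fst_cont X _ p).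
have h2 : (fun q : X * Rdefinitions.R => a * q.2 + b) @ nbhs p --> (a * p.2 + b).
  exact: (continuous_comp (@snd_cont X _ p) (@aff_contR a b p.2)).
exact: (@cvg_pair _ _ _ (nbhs p) _ _ (nbhs_filter p) (nbhs_filter _) (nbhs_filter _) _ _ h1 h2).
Qed.
Lemma paste {T U : topologicalType} (A B C : set T) (f : T -> U) :
  closed A -> closed B -> C `<=` A `|` B ->
  {within C `&` A, continuous f} -> {within C `&` B, continuous f} ->
  {within C, continuous f}.
Proof.
move=> cA cB CAB ctsA ctsB; apply/continuous_closedP => W oW.
case/continuous_closedP/(_ _ oW)/closed_subspaceP: ctsA => V1 cV1 V1W.
case/continuous_closedP/(_ _ oW)/closed_subspaceP: ctsB => V2 cV2 V2W.
apply/closed_subspaceP; exists ((V1 `&` A) `|` (V2 `&` B)).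
  by apply: closedU; exact: closedI.
apply/seteqP; split => x.
  case=> [[[V1x Ax]|[V2x Bx]] Cx].
    have : (V1 `&` (C `&` A)) x by [].
    by rewrite V1W => -[].
  have : (V2 `&` (C `&` B)) x by [].
  by rewrite V2W => -[].
case=> Wx Cx; split => //; case: (CAB x Cx) => Ax; [left|right].
  have : ((from_subspace (C `&` A) f @^-1` W) `&` (C `&` A)) x by [].
  by rewrite -V1W => -[].
have : ((from_subspace (C `&` B) f @^-1` W) `&` (C `&` B)) x by [].
by rewrite -V2W => -[].
Qed.

Lemma within_comp {T1 T2 Z : topologicalType} (A : set T1) (B : set T2)
  (phi : T1 -> T2) (H : T2 -> Z) :
  continuous phi -> (forall x, A x -> B (phi x)) -> {within B, continuous H} ->
  {within A, continuous (H \o phi)}.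
Proof.
move=> cphi AB /subspace_continuousP cH; apply/subspace_continuousP => x Ax.
move=> P /= /(cH _ (AB _ Ax)) => HP.
have := cphi x _ HP.
rewrite /= nbhs_simpl /=.
apply: filterS => y /= Hy Ay; exact: Hy (AB _ Ay).
Qed.

Lemma glue_at {T Z : topologicalType} (S O S' : set T) (G K : T -> Z) z :
  open O -> O z -> (forall y, S y -> O y -> S' y /\ G y = K y) ->
  {within S', continuous K} -> S z -> G @ within S (nbhs z) --> G z.
Proof.
move=> oO Oz hyp /subspace_continuousP cK Sz.
have [S'z Gz] := hyp z Sz Oz.
move=> P; rewrite Gz => /(cK _ S'z) KP.
rewrite /= nbhs_simpl /=.
have Onb : nbhs z O by apply: open_nbhs_nbhs.
move: KP; rewrite /= nbhs_simpl /= => KP.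
have KP' : nbhs z [set y | S' y -> P (K y)] := KP.
suff : nbhs z [set y | S y -> P (G y)] by [].
apply: filterS2 KP' Onb => y Hy Oy Sy.
have [S'y ->] := hyp y Sy Oy; exact: Hy.
Qed.
Lemma closed_snd_le {X : topologicalType} (c : RR) : closed [set p : X * RR | p.2 <= c].
Proof.
have := proj1 (continuous_closedP (@snd X RR)) (@snd_cont X RR) _ (@closed_le _ c).
by [].
Qed.
Lemma closed_snd_ge {X : topologicalType} (c : RR) : closed [set p : X * RR | c <= p.2].
Proof.
have := proj1 (continuous_closedP (@snd X RR)) (@snd_cont X RR) _ (@closed_ge _ c).
by [].
Qed.

Lemma concat_hom {X Y : topologicalType} (W : set X) (f g h : X -> Y) :
  homotopic_on W f g -> homotopic_on W g h -> homotopic_on W f h.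
Proof.
case=> H1 [c1 H10 H11]; case=> H2 [c2 H20 H21].
pose K := fun p : X * RR =>
  if p.2 <= 1/2 then H1 (p.1, 2 * p.2 + 0) else H2 (p.1, 2 * p.2 + -1).
exists K; split.
- apply: (@paste _ _ [set p : X * RR | p.2 <= 1/2] [set p : X * RR | 1/2 <= p.2] (W `*` unit_interval) K).
  + exact: closed_snd_le.
  + exact: closed_snd_ge.
  + move=> p _; have /orP[hp|hp] := le_total p.2 (1/2); [left|right]; exact: hp.
  + have c := @within_comp _ _ _ ((W `*` unit_interval) `&` [set p | p.2 <= 1/2])
        _ _ _ (@phi_cont X 2 0) _ c1.
    apply: (subspace_eq_continuous _ (c _)).
      move=> [x t]; rewrite inE /= => -[_ ht]. by rewrite /from_subspace /K /= ht.
    move=> [x t] /= [[Wx]]; rewrite /unit_interval /= !in_itv /= => /andP[t0 t1] th.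
    split => //; apply/andP; split; lra.
  + have c := @within_comp _ _ _ ((W `*` unit_interval) `&` [set p | 1/2 <= p.2])
        _ _ _ (@phi_cont X 2 (-1)) _ c2.
    apply: (subspace_eq_continuous _ (c _)).
      move=> [x t]; rewrite inE /= => -[[Wx _] ht]; rewrite /from_subspace /K /=.
      case: ifPn => // ht'.
      have -> : t = 1/2 by apply/eqP; rewrite eq_le ht ht'.
      have -> : 2 * (1/2) + -1 = 0 :> RR by lra.
      have -> : 2 * (1/2) + 0 = 1 :> RR by lra.
      by rewrite H11 // H20.
    move=> [x t] /= [[Wx]]; rewrite /unit_interval /= !in_itv /= => /andP[t0 t1] th.
    split => //; apply/andP; split; lra.
- move=> x Wx; rewrite /K /=.
  have -> : (0 <= 1/2 :> RR) by lra.
  by rewrite mulr0 addr0 H10.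
- move=> x Wx; rewrite /K /=.
  have -> : (1 <= 1/2 :> RR) = false by apply/negbTE; rewrite -ltNge; lra.
  have -> : 2 * 1 + -1 = 1 :> RR by lra.
  by rewrite H21.
Qed.
Lemma refine_cover {X : topologicalType} (U : nat -> set X) (n : nat) :
  normal_space X -> (forall j, (j <= n)%N -> open (U j)) ->
  (forall x, exists2 j, (j <= n)%N & U j x) ->
  exists u : nat -> X -> RR, [/\ (forall i, continuous (u i)),
    (forall i x, 0 <= u i x), (forall i x, 0 < u i x -> U i x) &
    (forall x, exists2 i, (i <= n)%N & 0 < u i x)].
Proof.
move=> nX oU cU.
suff: forall k, (k <= n.+1)%N -> exists u : nat -> X -> RR,
    [/\ (forall i, continuous (u i)), (forall i x, 0 <= u i x),
    (forall i x, 0 < u i x -> U i x) &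
    (forall x, exists2 i, (i <= n)%N &
       (((i < k)%N /\ 0 < u i x) \/ ((k <= i)%N /\ U i x)))].
  move=> /(_ n.+1 (leqnn _)) [u [cu u0 uU cov]]; exists u; split => // x.
  have [i iin [[_ ui]|[ni _]]] := cov x; first by exists i.
  by move: (leq_trans ni iin); rewrite ltnn.
elim=> [_|k IH kn].
  exists (fun _ _ => 0); split => //.
  - by move=> i x; exact: cvg_cst.
  - by move=> i x; rewrite ltxx.
  - by move=> x; have [i iin Ux] := cU x; exists i => //; right; split.
have [u [cu u0 uU cov]] := IH (ltnW kn).
have kn' : (k <= n)%N by [].
pose O := [set x | exists2 i, (i <= n)%N & (i != k) /\
   (((i < k)%N /\ 0 < u i x) \/ ((k < i)%N /\ U i x))].
have oO : open O.
  have -> : O = \bigcup_(i in [set i | (i <= n)%N /\ i != k])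
     ([set x | (i < k)%N /\ 0 < u i x] `|` [set x | (k < i)%N /\ U i x]).
    apply/seteqP; split => x.
      by case=> i iin [ik H]; exists i.
    by case=> i [iin ik] H; exists i.
  apply: bigcup_open => i [iin ik]; apply: openU.
    have [ik'|ik'] := ltnP i k.
      have -> : [set x | true /\ 0 < u i x] = u i @^-1` [set y | 0 < y].
        by apply/seteqP; split => x /=; [case | move=> ?; split].
      apply: (proj1 (continuousP (u i)) (cu i)). exact: (@open_gt RR 0).
    have -> : [set x | false /\ 0 < u i x] = set0.
      by apply/seteqP; split => x //= [].
    exact: open0.
  have [ik'|ik'] := ltnP k i.
    have -> : [set x | true /\ U i x] = U i.
      by apply/seteqP; split => x /=; [case | move=> ?; split].
    exact: oU.
  have -> : [set x | false /\ U i x] = set0.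
    by apply/seteqP; split => x //= [].
  exact: open0.
have cA : closed (~` O) := open_closedC oO.
have cB : closed (~` U k) := open_closedC (oU k kn').
have AB : (~` U k) `&` (~` O) = set0.
  apply/seteqP; split => x // [nU nO].
  have [i iin H] := cov x; case: H => [[ik ui]|[ki Ui]].
    apply: nO; exists i => //; split; first by rewrite neq_ltn ik.
    by left.
  case: (eqVneq i k) => [eik|ik].
    by subst i; exact: nU Ui.
  apply: nO; exists i => //; split => //; right; split => //.
  by rewrite ltn_neqAle eq_sym ik ki.
have [F [cF F01 F0 F1]] := proj1 (@uniform_separatorP X RR _ _)
   (proj1 (@normal_separatorP RR X) nX _ _ cB cA AB).
pose u' := fun i => if i == k then F else u i.
exists u'; split.
- by move=> i; rewrite /u'; case: eqP => _.
- move=> i x; rewrite /u'; case: eqP => _ //.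
  have := F01 (F x) (ex_intro2 _ _ x I erefl).
  by rewrite /= in_itv /= => /andP[].
- move=> i x; rewrite /u'; case: eqP => [->|_]; last exact: uU.
  move=> Fx; apply: contrapT => nU.
  have : F x = 0 by exact: (F0 _ (ex_intro2 _ _ x nU erefl)).
  by move=> Fx0; rewrite Fx0 ltxx in Fx.
- move=> x; case: (pselect (O x)) => [[i iin [ik [[ilk ui]|[kli Ui]]]]|nO].
  + exists i => //; left; split; first by rewrite ltnS ltnW.
    by rewrite /u' (negbTE ik).
  + by exists i => //; right; split.
  + exists k => //; left; split; first by rewrite ltnS.
    rewrite /u' eqxx.
    have -> : F x = 1 by exact: (F1 _ (ex_intro2 _ _ x nO erefl)).
    exact: ltr01.
Qed.
Lemma cont_add_gen (R : realType) (T : topologicalType) (f g : T -> R) :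
  continuous f -> continuous g -> continuous (fun x => f x + g x).
Proof. by move=> cf cg x; apply: cvgD; [exact: cf|exact: cg]. Qed.
Lemma cont_sub_gen (R : realType) (T : topologicalType) (f g : T -> R) :
  continuous f -> continuous g -> continuous (fun x => f x - g x).
Proof. by move=> cf cg x; apply: cvgB; [exact: cf|exact: cg]. Qed.
Lemma cont_add {T : topologicalType} (f g : T -> RR) :
  continuous f -> continuous g -> continuous (fun x => f x + g x).
Proof. exact: cont_add_gen. Qed.
Lemma cont_sub {T : topologicalType} (f g : T -> RR) :
  continuous f -> continuous g -> continuous (fun x => f x - g x).
Proof. exact: cont_sub_gen. Qed.

Fixpoint psum {X : Type} (u : nat -> X -> RR) (i : nat) (x : X) : RR :=
  match i with 0%N => 0 | i.+1 => psum u i x + u i x end.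

Lemma psum_cont {X : topologicalType} (u : nat -> X -> RR) :
  (forall i, continuous (u i)) -> forall i, continuous (psum u i).
Proof.
move=> cu; elim=> [|i IH] /= x; first exact: cvg_cst.
exact: (@cont_add _ (psum u i) (u i) IH (cu i) x).
Qed.

Lemma psum_mono {X : Type} (u : nat -> X -> RR) x :
  (forall i, 0 <= u i x) -> forall i j, (i <= j)%N -> psum u i x <= psum u j x.
Proof.
move=> u0 i; elim=> [|j IH]; first by rewrite leqn0 => /eqP ->.
rewrite leq_eqVlt => /orP[/eqP ->//|ij].
apply: (le_trans (IH ij)) => /=; rewrite lerDl; exact: u0.
Qed.

Lemma open_ltf {X : topologicalType} (f g : X -> RR) :
  continuous f -> continuous g -> open [set x | f x < g x].
Proof.
move=> cf cg.
have -> : [set x | f x < g x] = (fun x => g x - f x) @^-1` [set y | 0 < y].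
  by apply/seteqP; split => x /=; rewrite subr_gt0.
apply: (proj1 (continuousP (fun x => g x - f x))); last exact: (@open_gt RR 0).
exact: cont_sub.
Qed.

Lemma first_pos (a : nat -> RR) n : a 0%N <= 0 -> 0 < a n.+1 ->
  exists2 i, (i <= n)%N & a i <= 0 < a i.+1.
Proof.
move=> a0; elim: n => [|n IH] an; first by exists 0%N => //; rewrite a0 an.
have [an1|an1] := ltP 0 (a n.+1).
  by have [i ilt H] := IH an1; exists i => //; exact: leqW.
by exists n.+1 => //; rewrite an1 an.
Qed.

Lemma psum_first {X : Type} (u : nat -> X -> RR) n x :
  (forall i, 0 <= u i x) -> (exists2 i, (i <= n)%N & 0 < u i x) ->
  exists2 i, (i <= n)%N & psum u i x <= 0 < psum u i.+1 x.
Proof.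
move=> u0 [i iin ui]; apply: (first_pos (a := fun k => psum u k x)) => //.
have iin' : (i.+1 <= n.+1)%N by [].
apply: (lt_le_trans _ (psum_mono u0 iin')) => /=.
apply: (lt_le_trans ui); rewrite lerDr.
exact: (psum_mono u0 (leq0n i)).
Qed.

Definition Wset {X : Type} (u v : nat -> X -> RR) (i j : nat) : set X :=
  [set x | [/\ psum u i x < psum u i.+1 x, psum v j x < psum v j.+1 x,
              psum v j x < psum u i.+1 x & psum u i x < psum v j.+1 x]].

Lemma Wset_open {X : topologicalType} (u v : nat -> X -> RR) i j :
  (forall i, continuous (u i)) -> (forall i, continuous (v i)) -> open (Wset u v i j).
Proof.
move=> cu cv.
have -> : Wset u v i j = [set x | psum u i x < psum u i.+1 x] `&`
   [set x | psum v j x < psum v j.+1 x] `&`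
   [set x | psum v j x < psum u i.+1 x] `&` [set x | psum u i x < psum v j.+1 x].
  apply/seteqP; split => x /=; first by case.
  by move=> [[[]]]; split.
by apply: openI; [apply: openI; [apply: openI|]|]; apply: open_ltf;
  apply: psum_cont.
Qed.

Lemma Wset_sub {X : Type} (u v : nat -> X -> RR) i j x :
  Wset u v i j x -> 0 < u i x /\ 0 < v j x.
Proof. by case=> /= h1 h2 _ _; split; [move: h1|move: h2]; rewrite ltrDl. Qed.

Lemma Wset_disj {X : Type} (u v : nat -> X -> RR) i j i' j' x :
  (forall i, 0 <= u i x) -> (forall i, 0 <= v i x) ->
  (i + j = i' + j')%N -> Wset u v i j x -> Wset u v i' j' x -> i = i' /\ j = j'.
Proof.
move=> u0 v0.
wlog: i j i' j' / (i <= i')%N.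
  move=> H e w w'; have [ii'|ii'] := leqP i i'; first exact: H.
  by have [] := H i' j' i j (ltnW ii') (esym e) w' w.
move=> ii' e [_ _ a1 _] [_ _ _ a2].
have [eii'|lii'] := eqVneq i i'.
  by subst i'; split => //; apply/eqP; rewrite -(eqn_add2l i) e.
have lt : (i < i')%N by rewrite ltn_neqAle lii' ii'.
have jj' : (j'.+1 <= j)%N.
  by move: e lt; rewrite -(ltn_add2r j); move=> -> ; rewrite ltn_add2l.
have := lt_le_trans a1 (psum_mono u0 lt).
move=> /lt_trans /(_ a2) /lt_le_trans /(_ (psum_mono v0 jj')).
by rewrite ltxx.
Qed.

Lemma Wset_cov {X : Type} (u v : nat -> X -> RR) n m x :
  (forall i, 0 <= u i x) -> (forall i, 0 <= v i x) ->
  (exists2 i, (i <= n)%N & 0 < u i x) -> (exists2 j, (j <= m)%N & 0 < v j x) ->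
  exists i j, [/\ (i <= n)%N, (j <= m)%N & Wset u v i j x].
Proof.
move=> u0 v0 hu hv.
have [i iin /andP[a1 a2]] := psum_first u0 hu.
have [j jin /andP[b1 b2]] := psum_first v0 hv.
exists i, j; split => //; split.
- exact: (le_lt_trans a1 a2).
- exact: (le_lt_trans b1 b2).
- exact: (le_lt_trans b1 a2).
- exact: (le_lt_trans a1 b2).
Qed.

Lemma restrict_hom {X Y : topologicalType} (A B : set X) (f g : X -> Y) :
  A `<=` B -> homotopic_on B f g -> homotopic_on A f g.
Proof.
move=> AB [H [c H0 H1]]; exists H; split.
- apply: (continuous_subspaceW _ c) => -[x t] [/= Ax It]; split => //.
  exact: AB.
- by move=> x Ax; apply: H0; exact: AB.
- by move=> x Ax; apply: H1; exact: AB.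
Qed.

Lemma key_cover {X Y : topologicalType} (f g h : X -> Y) n m :
  normal_space X -> hdist_cover f g n -> hdist_cover g h m ->
  hdist_cover f h (n + m).
Proof.
move=> nX [U [oU cU hU]] [V [oV cV hV]].
have [u [cu u0 uU ucov]] := refine_cover nX oU cU.
have [v [cv v0 vU vcov]] := refine_cover nX oV cV.
pose W := Wset u v.
have hW : forall i j, (i <= n)%N -> (j <= m)%N -> homotopic_on (W i j) f h.
  move=> i j iin jm; apply: (@concat_hom _ _ _ f g h).
    apply: (restrict_hom _ (hU i iin)) => x wx; have [ui _] := Wset_sub wx; exact: uU ui.
  apply: (restrict_hom _ (hV j jm)) => x wx; have [_ vj] := Wset_sub wx; exact: vU vj.
have : forall p : nat * nat, exists H : X * RR -> Y,
    ((p.1 <= n)%N -> (p.2 <= m)%N ->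
    [/\ {within W p.1 p.2 `*` unit_interval, continuous H},
        (forall x, W p.1 p.2 x -> H (x, 0) = f x) &
        (forall x, W p.1 p.2 x -> H (x, 1) = h x)]).
  move=> [i j] /=; have [/andP[iin jm]|nij] := boolP ((i <= n)%N && (j <= m)%N).
    by have [H HP] := hW i j iin jm; exists H.
  by exists (fun q => f q.1) => iin jm; rewrite iin jm in nij.
move=> /choice [HH HHp].
pose Wk k := [set x | exists p : nat * nat,
  [/\ (p.1 <= n)%N, (p.2 <= m)%N, (p.1 + p.2 = k)%N & W p.1 p.2 x]].
exists Wk; split.
- move=> k _.
  have -> : Wk k = \bigcup_(p in [set p : nat * nat |
      [/\ (p.1 <= n)%N, (p.2 <= m)%N & (p.1 + p.2 = k)%N]]) W p.1 p.2.
    apply/seteqP; split => x.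
      by case=> p [a b c d]; exists p.
    by case=> p [a b c] d; exists p.
  by apply: bigcup_open => p _; exact: Wset_open.
- move=> x.
  have [i [j [iin jm wx]]] := Wset_cov (fun i => u0 i x) (fun i => v0 i x)
    (ucov x) (vcov x).
  exists (i + j)%N; first exact: leq_add.
  by exists (i, j).
- move=> k kle.
  have : forall x : X, exists p : nat * nat, Wk k x ->
      [/\ (p.1 <= n)%N, (p.2 <= m)%N, (p.1 + p.2 = k)%N & W p.1 p.2 x].
    move=> x; case: (pselect (Wk k x)) => [[p Hp]|nW]; first by exists p.
    by exists (0, 0)%N.
  move=> /choice [idx idxP].
  pose G := fun q : X * RR => HH (idx q.1) q.
  exists G; split.
  + apply/subspace_continuousP => -[x t] [/= Wkx It].
    have [p1n p2m pk Wpx] := idxP x Wkx.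
    have [cH _ _] := HHp (idx x) p1n p2m.
    apply: (@glue_at _ _ (Wk k `*` unit_interval)
       (fst @^-1` W (idx x).1 (idx x).2) (W (idx x).1 (idx x).2 `*` unit_interval)
       G (HH (idx x)) (x, t)) => //.
    * apply: (proj1 (continuousP fst) fst_cont).
      by apply: Wset_open.
    * move=> [y s] [/= Wky Is] /= Wpy.
      have [q1n q2m qk Wqy] := idxP y Wky.
      have [e1 e2] := Wset_disj (fun i => u0 i y) (fun i => v0 i y)
        (etrans qk (esym pk)) Wqy Wpy.
      split => //; rewrite /G /=.
      suff -> : idx y = idx x by [].
      by move: e1 e2; case: (idx y) => a b; case: (idx x) => c d /= -> ->.
  + move=> x Wkx; have [p1n p2m _ Wpx] := idxP x Wkx.
    by have [_ H0 _] := HHp (idx x) p1n p2m; exact: H0.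
  + move=> x Wkx; have [p1n p2m _ Wpx] := idxP x Wkx.
    by have [_ _ H1] := HHp (idx x) p1n p2m; exact: H1.
Qed.

Section hd.
Context {X Y : topologicalType} (f g : X -> Y).

Lemma hdist_le n : hdist_cover f g n -> (hdist f g <= (n%:R)%:E)%E.
Proof. by move=> hn; apply: ereal_inf_lbound; exists n. Qed.

Lemma hdist_ge0 : (0 <= hdist f g)%E.
Proof. by apply: le_ereal_inf_tmp => _ [k _ <-]; rewrite lee_fin ler0n. Qed.

Lemma hdist_neqNy : hdist f g != -oo%E.
Proof.
apply/negP => /eqP e; have := hdist_ge0; rewrite e.
by move=> /(lt_le_trans ltNy0); rewrite ltxx.
Qed.

Lemma hdist_eq n : hdist_cover f g n -> (forall k, hdist_cover f g k -> (n <= k)%N) ->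
  hdist f g = (n%:R)%:E.
Proof.
move=> hn nmin; apply/le_anti/andP; split; first exact: hdist_le.
apply: le_ereal_inf_tmp => _ [k hk <-]; rewrite lee_fin ler_nat; exact: nmin.
Qed.

Lemma hdist_oo : ~ (exists n, hdist_cover f g n) -> hdist f g = +oo%E.
Proof.
move=> H; rewrite /hdist.
have -> : [set ((n%:R)%:E : \bar RR) | n in hdist_cover f g] = set0.
  by apply/seteqP; split => // y [k hk _]; exfalso; apply: H; exists k.
exact: ereal_inf0.
Qed.

Lemma min_cover : (exists n, hdist_cover f g n) ->
  exists n, hdist_cover f g n /\ forall k, hdist_cover f g k -> (n <= k)%N.
Proof.
move=> ex; have exP : exists n, `[< hdist_cover f g n >].
  by case: ex => n hn; exists n; apply/asboolP.
case: (ex_minnP exP) => n /asboolP hn nmin; exists n; split => // k hk.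
by apply: nmin; exact/asboolP.
Qed.
End hd.

Local Open Scope ereal_scope.

Theorem proposition3p17 (X Y : topologicalType) (f g h : X -> Y) :
  normal_space X -> continuous f -> continuous g -> continuous h ->
  hdist f h <= hdist f g + hdist g h.
Proof.
move=> nX _ _ _.
case: (pselect (exists n, hdist_cover f g n)) => [efg|nfg]; last first.
  by rewrite (hdist_oo nfg) addye ?leey //; exact: hdist_neqNy.
case: (pselect (exists n, hdist_cover g h n)) => [egh|ngh]; last first.
  by rewrite (hdist_oo ngh) addey ?leey //; exact: hdist_neqNy.
have [n [hn nmin]] := min_cover efg; have [m [hm mmin]] := min_cover egh.
rewrite (hdist_eq hn nmin) (hdist_eq hm mmin) -EFinD -natrD.
exact: hdist_le (key_cover nX hn hm).
Qed.
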